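(* Let $S$ and $T$ be expanding automaton semigroups. Then $S\times T$ is an expanding automaton semigroup if and only if $S\times T$ is finitely generated.
   Context: An expanding automaton is $(Q,\Sigma,t,o)$ with $Q$ a finite set of states, $\Sigma$ a finite alphabet, $t:Q\times\Sigma\to Q$ and $o:Q\times\Sigma\to\Sigma^+$. Each state $q$ induces $q:\Sigma^*\to\Sigma^*$ by $q(\emptyset)=\emptyset$, $q(\sigma w)=o(q,\sigma)\,q'(w)$ with $q'=t(q,\sigma)$; an expanding automaton semigroup is (a semigroup isomorphic to) the semigroup of maps generated under composition by the states. *)

(* Defs.v *)
From Stdlib Require Import List.
From mathcomp Require Import all_boot.
Set Implicit Arguments. Unset Strict Implicit. Unset Printing Implicit Defensive.

Record Sgrp := {
  sg_car :> Type;
  sg_op : sg_car -> sg_car -> sg_car;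
  sg_assoc : associative sg_op }.

Definition prod_op (S T : Sgrp) (x y : S * T) : S * T :=
  (sg_op x.1 y.1, sg_op x.2 y.2).

Lemma prod_op_assoc (S T : Sgrp) : associative (@prod_op S T).
Proof. by move=> [a b] [c d] [e f]; rewrite /prod_op /= !sg_assoc. Qed.

Definition prod_sg (S T : Sgrp) : Sgrp :=
  {| sg_car := (S * T)%type; sg_op := @prod_op S T; sg_assoc := @prod_op_assoc S T |}.

Fixpoint sg_prod_ne (S : Sgrp) (x : S) (s : list S) : S :=
  match s with
  | [::] => x
  | y :: s' => sg_op x (sg_prod_ne y s')
  end.

Definition finitely_generated (S : Sgrp) : Prop :=
  exists gens : list S, forall x : S,
    exists (g : S) (s : list S),
      In g gens /\ (forall y, In y s -> In y gens) /\
      x = sg_prod_ne g s.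

Record expanding_automaton := {
  ea_Q : finType;
  ea_Sig : finType;
  ea_t : ea_Q -> ea_Sig -> ea_Q;
  ea_o : ea_Q -> ea_Sig -> seq ea_Sig;
  ea_o_nonempty : forall q a, ea_o q a <> [::] }.

Fixpoint ea_act (A : expanding_automaton) (q : ea_Q A) (w : seq (ea_Sig A))
  : seq (ea_Sig A) :=
  match w with
  | [::] => [::]
  | a :: w' => ea_o q a ++ ea_act (ea_t q a) w'
  end.

Fixpoint ea_comp (A : expanding_automaton) (q : ea_Q A) (qs : seq (ea_Q A))
  : seq (ea_Sig A) -> seq (ea_Sig A) :=
  match qs with
  | [::] => ea_act q
  | p :: qs' => ea_act q \o ea_comp p qs'
  end.

(* S is an expanding automaton semigroup: S is isomorphic to the semigroup of
   maps Sigma^* -> Sigma^* generated under composition by the states of some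
   expanding automaton A (maps being compared extensionally). *)
Definition is_expanding_automaton_semigroup (S : Sgrp) : Prop :=
  exists (A : expanding_automaton) (phi : S -> seq (ea_Sig A) -> seq (ea_Sig A)),
    [/\ (forall x y : S, phi x =1 phi y -> x = y),
        (forall x y : S, phi (sg_op x y) =1 phi x \o phi y),
        (forall x : S, exists (q : ea_Q A) (qs : seq (ea_Q A)), phi x =1 ea_comp q qs)
      & (forall (q : ea_Q A) (qs : seq (ea_Q A)), exists x : S, phi x =1 ea_comp q qs)].

(* Main.v *)
From Stdlib Require Import List ClassicalEpsilon.
Require Import Defs.
From mathcomp Require Import all_boot.
Set Implicit Arguments. Unset Strict Implicit. Unset Printing Implicit Defensive.

Section Comp.
Variable A : expanding_automaton.
Notation Q := (ea_Q A).
Notation Sg := (ea_Sig A).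

Fixpoint ea_fin (q : Q) (w : seq Sg) : Q :=
  match w with [::] => q | a :: w' => ea_fin (ea_t q a) w' end.

Lemma ea_act_cat q u v : ea_act q (u ++ v) = ea_act q u ++ ea_act (ea_fin q u) v.
Proof. by elim: u q => //= a u IH q; rewrite IH catA. Qed.

Lemma ea_fin_cat q u v : ea_fin q (u ++ v) = ea_fin (ea_fin q u) v.
Proof. by elim: u q => //=. Qed.

Lemma ea_act_nil (q : Q) (w : seq Sg) : (ea_act q w == [::]) = (w == [::]).
Proof.
case: w => //= a w; case E: (ea_o q a) => [|x s] //.
by have := @ea_o_nonempty A q a; rewrite E.
Qed.

Fixpoint cmap (l : seq Q) : seq Sg -> seq Sg :=
  match l with [::] => id | q :: l' => fun w => ea_act q (cmap l' w) end.
Fixpoint cstep (l : seq Q) (a : Sg) : seq Sg * seq Q :=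
  match l with
  | [::] => ([:: a], [::])
  | q :: l' => let p := cstep l' a in (ea_act q p.1, ea_fin q p.1 :: p.2)
  end.
Fixpoint cfin (l : seq Q) (w : seq Sg) : seq Q :=
  match l with [::] => [::] | q :: l' => ea_fin q (cmap l' w) :: cfin l' w end.

Lemma cmap_nil l : cmap l [::] = [::].
Proof. by elim: l => //= q l ->. Qed.

Lemma cfin_nil l : cfin l [::] = l.
Proof. by elim: l => //= q l ->; rewrite cmap_nil. Qed.

Lemma cmap_cons l a w : cmap l (a :: w) = (cstep l a).1 ++ cmap (cstep l a).2 w.
Proof. by elim: l => //= q l IH; rewrite IH ea_act_cat. Qed.

Lemma cmap_cat l u v : cmap l (u ++ v) = cmap l u ++ cmap (cfin l u) v.
Proof. by elim: l => //= q l IH; rewrite IH ea_act_cat. Qed.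

Lemma cstep_size l a : size (cstep l a).2 = size l.
Proof. by elim: l => //= q l ->. Qed.

Lemma cstep_ne l a : (cstep l a).1 != [::].
Proof. by elim: l => //= q l IH; rewrite ea_act_nil. Qed.

Lemma cstep_cat l l' a : cstep (l ++ l') a =
  (cmap l (cstep l' a).1, cfin l (cstep l' a).1 ++ (cstep l' a).2).
Proof.
elim: l => [|q l IH] /=; first by case: (cstep l' a).
by rewrite IH.
Qed.

Lemma cfin_cons l a u : cfin l (a :: u) = cfin (cstep l a).2 u.
Proof. by elim: l => //= q l IH; rewrite IH cmap_cons ea_fin_cat. Qed.

Lemma cmap_comp q qs : ea_comp q qs =1 cmap (q :: qs).
Proof. by elim: qs q => [|p qs IH] q w //=; rewrite IH. Qed.

Lemma cmap_catl l l' w : cmap (l ++ l') w = cmap l (cmap l' w).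
Proof. by elim: l => //= q l ->. Qed.

Lemma cmap_ext l l' : cmap l =1 cmap l' -> forall a,
  (cstep l a).1 = (cstep l' a).1 /\ cmap (cstep l a).2 =1 cmap (cstep l' a).2.
Proof.
move=> E a.
have h1 : (cstep l a).1 = (cstep l' a).1.
  by have := E [:: a]; rewrite !cmap_cons !cmap_nil !cats0.
split=> // w; have := E (a :: w); rewrite !cmap_cons h1.
by move/eqP; rewrite eqseq_cat // => /andP[_ /eqP].
Qed.
End Comp.

Section Lall.
Variable Q : finType.
Fixpoint Lall (n : nat) : seq (seq Q) :=
  if n is n'.+1 then [::] :: [seq q :: l | q <- enum Q, l <- Lall n'] else [:: [::]].

Lemma mem_LallE n l : (l \in Lall n) = (size l <= n).
Proof.
elim: n l => [|n IH] l /=; first by case: l.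
rewrite in_cons; case: l => [|q l] //=.
have -> : (q :: l \in [seq q :: l | q <- enum Q, l <- Lall n]) = (l \in Lall n).
  apply/allpairsPdep/idP.
  - by move=> [x [y [_ hy [_ ->]]]].
  - by move=> h; exists q, l; rewrite mem_enum.
by rewrite IH.
Qed.
End Lall.

Section Prod.
Variables (A B : expanding_automaton) (N : nat).
Notation PQ := ((ea_Q A * seq_sub (Lall (ea_Q A) N)) * (ea_Q B * seq_sub (Lall (ea_Q B) N)))%type.
Notation PS := (ea_Sig A + ea_Sig B)%type.

Definition sA (st : PQ) : seq (ea_Q A) := st.1.1 :: ssval st.1.2.
Definition sB (st : PQ) : seq (ea_Q B) := st.2.1 :: ssval st.2.2.

Definition PT (st : PQ) (c : PS) : PQ :=
  match c with
  | inl a => let l2 := (cstep (sA st) a).2 in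
             ((head st.1.1 l2, insubd st.1.2 (behead l2)), st.2)
  | inr b => let l2 := (cstep (sB st) b).2 in
             (st.1, (head st.2.1 l2, insubd st.2.2 (behead l2)))
  end.

Definition PO (st : PQ) (c : PS) : seq PS :=
  match c with
  | inl a => map inl (cstep (sA st) a).1
  | inr b => map inr (cstep (sB st) b).1
  end.

Lemma PO_ne st c : PO st c <> [::].
Proof.
case: c => a; rewrite /PO.
  by move: (cstep_ne (sA st) a); case: (cstep (sA st) a).1.
by move: (cstep_ne (sB st) a); case: (cstep (sB st) a).1.
Qed.

Definition PA : expanding_automaton :=
  {| ea_Q := PQ; ea_Sig := PS; ea_t := PT; ea_o := PO; ea_o_nonempty := PO_ne |}.

Fixpoint M (lA : seq (ea_Q A)) (lB : seq (ea_Q B)) (w : seq PS) : seq PS :=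
  match w with
  | [::] => [::]
  | inl a :: w' => map inl (cstep lA a).1 ++ M (cstep lA a).2 lB w'
  | inr b :: w' => map inr (cstep lB b).1 ++ M lA (cstep lB b).2 w'
  end.

Lemma PT_inl st a : sA (PT st (inl a)) = (cstep (sA st) a).2 /\ sB (PT st (inl a)) = sB st.
Proof.
split=> //; rewrite /PT /sA /=.
rewrite val_insubd mem_LallE cstep_size -mem_LallE.
by have := ssvalP st.1.2; rewrite /in_mem /= => ->.
Qed.

Lemma PT_inr st b : sB (PT st (inr b)) = (cstep (sB st) b).2 /\ sA (PT st (inr b)) = sA st.
Proof.
split=> //; rewrite /PT /sB /=.
rewrite val_insubd mem_LallE cstep_size -mem_LallE.
by have := ssvalP st.2.2; rewrite /in_mem /= => ->.
Qed.

Lemma act_M (st : PQ) w : ea_act (A := PA) st w = M (sA st) (sB st) w.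
Proof.
elim: w st => //= [[a|b] w IH] st /=; rewrite IH.
  by case: (PT_inl st a) => -> ->.
by case: (PT_inr st b) => -> ->.
Qed.

Lemma M_inl lA lB u r : M lA lB (map inl u ++ r) = map inl (cmap lA u) ++ M (cfin lA u) lB r.
Proof.
elim: u lA => [|a u IH] lA /=; first by rewrite cmap_nil cfin_nil.
by rewrite IH cmap_cons cfin_cons map_cat catA.
Qed.

Lemma M_inr lA lB u r : M lA lB (map inr u ++ r) = map inr (cmap lB u) ++ M lA (cfin lB u) r.
Proof.
elim: u lB => [|a u IH] lB /=; first by rewrite cmap_nil cfin_nil.
by rewrite IH cmap_cons cfin_cons map_cat catA.
Qed.

Lemma M_comp lA lB lA' lB' w : M lA lB (M lA' lB' w) = M (lA ++ lA') (lB ++ lB') w.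
Proof.
elim: w lA lB lA' lB' => // [[a|b] w IH] lA lB lA' lB' /=.
  by rewrite M_inl IH cstep_cat.
by rewrite M_inr IH cstep_cat.
Qed.

Lemma M_ext lA lA' lB lB' : cmap lA =1 cmap lA' -> cmap lB =1 cmap lB' ->
  M lA lB =1 M lA' lB'.
Proof.
move=> EA EB w; elim: w lA lA' lB lB' EA EB => // [[a|b] w IH] lA lA' lB lB' EA EB /=.
  by have [h1 h2] := cmap_ext EA a; rewrite h1 (IH _ _ _ _ h2 EB).
by have [h1 h2] := cmap_ext EB b; rewrite h1 (IH _ _ _ _ EA h2).
Qed.

Lemma M_inl_only lA lB u : M lA lB (map inl u) = map inl (cmap lA u).
Proof. by have := M_inl lA lB u [::]; rewrite !cats0. Qed.

Lemma M_inr_only lA lB u : M lA lB (map inr u) = map inr (cmap lB u).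
Proof. by have := M_inr lA lB u [::]; rewrite !cats0. Qed.
End Prod.

Lemma choice_fun (X Y : Type) (P : X -> Y -> Prop) :
  (forall x, exists y, P x y) -> {f : X -> Y | forall x, P x (f x)}.
Proof.
move=> H; exists (fun x => proj1_sig (constructive_indefinite_description _ (H x))).
by move=> x; exact: proj2_sig (constructive_indefinite_description _ (H x)).
Qed.

Lemma In_map_seq (X Y : Type) (f : X -> Y) (a : X) (l : seq X) :
  In a l -> In (f a) (map f l).
Proof. elim: l => //= x l IH [->|h]; [by left | by right; apply: IH]. Qed.

Lemma In_of_mem (X : eqType) (a : X) (l : seq X) : a \in l -> In a l.
Proof.
elim: l => //= x l IH; rewrite in_cons => /orP[/eqP ->|h]; [by left|by right; apply: IH].
Qed.

Lemma In_sumn (X : Type) (f : X -> nat) (g : X) (l : seq X) :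
  In g l -> f g <= sumn (map f l).
Proof.
elim: l => //= x l IH [->|h]; first exact: leq_addr.
by apply: leq_trans (IH h) _; apply: leq_addl.
Qed.

Lemma eas_fg (X : Sgrp) : is_expanding_automaton_semigroup X -> finitely_generated X.
Proof.
move=> [A [phi [inj hom rep surj]]].
have [xq Hxq] := @choice_fun _ _ (fun (q : ea_Q A) (x : X) => phi x =1 ea_comp q [::])
  (fun q => surj q [::]).
exists (map xq (enum (ea_Q A))) => x.
have [q [qs Hx]] := rep x.
exists (xq q), (map xq qs); split; [|split].
- by apply: In_map_seq; apply: In_of_mem; rewrite mem_enum.
- move=> y; elim: qs {Hx} => //= p qs IH [<-|h]; last by apply: IH.
  by apply: In_map_seq; apply: In_of_mem; rewrite mem_enum.
- apply: inj => w; rewrite Hx.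
  elim: qs q {Hx} w => [|p qs IH] q w /=; first by rewrite Hxq.
  by rewrite hom /= Hxq /= IH.
Qed.

Theorem mainTheorem17 (S T : Sgrp) :
  is_expanding_automaton_semigroup S ->
  is_expanding_automaton_semigroup T ->
  (is_expanding_automaton_semigroup (prod_sg S T) <->
   finitely_generated (prod_sg S T)).
Proof.
move=> [A [phi [inj hom rep surj]]] [B [psi [injT homT repT surjT]]].
split; first exact: eas_fg.
move=> [gens Hg].
have [rS HrS] := @choice_fun _ _
  (fun (s : S) (p : ea_Q A * seq (ea_Q A)) => phi s =1 ea_comp p.1 p.2)
  (fun s => let: ex_intro q (ex_intro qs h) := rep s in ex_intro _ (q, qs) h).
have [rT HrT] := @choice_fun _ _
  (fun (t : T) (p : ea_Q B * seq (ea_Q B)) => psi t =1 ea_comp p.1 p.2)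
  (fun t => let: ex_intro q (ex_intro qs h) := repT t in ex_intro _ (q, qs) h).
pose rlS s := (rS s).1 :: (rS s).2.
pose rlT t := (rT t).1 :: (rT t).2.
have cS s : cmap (rlS s) =1 phi s by move=> w; rewrite HrS cmap_comp.
have cT t : cmap (rlT t) =1 psi t by move=> w; rewrite HrT cmap_comp.
pose N := sumn (map (fun g : S * T => size (rlS g.1) + size (rlT g.2)) gens).
have d1 : [::] \in Lall (ea_Q A) N by rewrite mem_LallE.
have d2 : [::] \in Lall (ea_Q B) N by rewrite mem_LallE.
pose PA' := PA A B N.
have hcat : forall x y : prod_sg S T,
  M (rlS (sg_op x.1 y.1)) (rlT (sg_op x.2 y.2)) =1 M (rlS x.1 ++ rlS y.1) (rlT x.2 ++ rlT y.2).
  move=> x y; apply: M_ext => u; rewrite cmap_catl.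
    by rewrite cS hom /= -!cS.
  by rewrite cT homT /= -!cT.
pose phi' (x : prod_sg S T) : seq (ea_Sig PA') -> seq (ea_Sig PA') := M (rlS x.1) (rlT x.2).
exists PA', phi'; split.
- move=> x y E.
  have e1 : x.1 = y.1.
    apply: inj => u; rewrite -!cS.
    have := E (map inl u); rewrite /phi' !M_inl_only.
    by apply: inj_map => a b [].
  have e2 : x.2 = y.2.
    apply: injT => u; rewrite -!cT.
    have := E (map inr u); rewrite /phi' !M_inr_only.
    by apply: inj_map => a b [].
  by case: x y e1 e2 {E} => [? ?] [? ?] /= -> ->.
- by move=> x y w; rewrite /phi' /= M_comp hcat.
- pose stOf (g : S * T) : ea_Q PA' :=
    (((rS g.1).1, insubd (SeqSub d1) (rS g.1).2),
     ((rT g.2).1, insubd (SeqSub d2) (rT g.2).2)).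
  have Hst g : In g gens -> phi' g =1 ea_act (A := PA') (stOf g).
    move=> hg w; rewrite act_M /phi' /sA /sB /= !val_insubd !mem_LallE.
    have hN := In_sumn (fun g : S * T => size (rlS g.1) + size (rlT g.2)) hg.
    have -> : size (rS g.1).2 <= N.
      by apply: leq_trans _ hN; apply: leq_trans (leq_addr _ _); rewrite /rlS /=.
    have -> : size (rT g.2).2 <= N.
      by apply: leq_trans _ hN; apply: leq_trans (leq_addl _ _); rewrite /rlT /=.
    by [].
  move=> x; have [g [s [hg [hs ->]]]] := Hg x.
  exists (stOf g), (map stOf s).
  elim: s g hg hs => [|y s IH] g hg hs w /=; first by rewrite Hst.
  have hy : In y gens by apply: hs; left.
  have hs' : forall z, In z s -> In z gens by move=> z hz; apply: hs; right.
  rewrite /phi' /=.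
  rewrite (hcat g (sg_prod_ne y s)).
  rewrite -M_comp.
  have := IH y hy hs' w; rewrite /phi' => ->.
  by rewrite -Hst.
- have base : forall st : ea_Q PA', exists x, phi' x =1 ea_act (A := PA') st.
    move=> st.
    have [s hs] := surj st.1.1 (ssval st.1.2).
    have [t ht] := surjT st.2.1 (ssval st.2.2).
    exists (s, t) => w; rewrite act_M /phi' /=.
    apply: M_ext => u; [by rewrite cS hs cmap_comp | by rewrite cT ht cmap_comp].
  move=> q qs; elim: qs q => [|p qs IH] q; first exact: base.
  have [x1 h1] := base q; have [x2 h2] := IH p.
  exists (sg_op x1 x2 : prod_sg S T) => w.
  rewrite /phi' /= (hcat x1 x2).
  rewrite -M_comp.
  have := h2 w; rewrite /phi' => ->.
  by have := h1 (ea_comp p qs w); rewrite /phi' => ->.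
Qed.
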